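(* Let $\hat B$ be the bus susceptance matrix of a connected power network with bus set $\mathcal N$, let $\mathcal T \subseteq \mathcal N$ with $|\mathcal T| \ge 2$, and fix $t \in \mathcal T$. Let $\theta$ be a random vector in $\mathbb R^{\mathcal N}$ with finite second moments and $\theta_t = 0$; let $S$ be a random bus uniformly distributed on $\mathcal T \setminus \{t\}$; and let $\Gamma$ be a real random variable with mean $0$ and variance $\sigma_\Gamma^2$; assume $\theta$, $S$, $\Gamma$ are mutually independent. Let $\hat\theta$ be the random vector with $\hat\theta_t = 0$ and $\hat B\hat\theta = \hat B\theta + \Gamma u^{S,t}$. Then $$\sigma^2_{\hat\theta} \;=\; \sigma^2_{\theta} + \frac{\sigma_\Gamma^2}{|\mathcal T| - 1}\sum_{s \in \mathcal T\setminus\{t\}} v^{s,t}(v^{s,t})^\top,$$ where $\sigma^2_X$ denotes the covariance matrix of a random vector $X$.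
   Context: DC power flow model: each line $km$ has reactance $x_{km} > 0$, and $\hat B_{kk} = \sum_{km \ni k} 1/x_{km}$, $\hat B_{km} = -1/x_{km}$ for a line $km$, $\hat B_{km} = 0$ otherwise. For distinct buses $s,t$, $u^{s,t}_s = 1$, $u^{s,t}_t = -1$, $u^{s,t}_k = 0$ otherwise, and $v^{s,t}$ is the unique vector with $\hat B v^{s,t} = u^{s,t}$ and $v^{s,t}_t = 0$. (In the paper $\theta$ represents phase angles with reference bus $t$ absent the defense, $\hat\theta$ the phase angles after the random injection $\Gamma$ at $S$ and $-\Gamma$ at $t$.) *)

(* Defs.v *)
From HB Require Import structures.
From mathcomp Require Import all_boot all_order all_algebra.
From mathcomp Require Import all_classical all_reals all_analysis.
Set Implicit Arguments. Unset Strict Implicit. Unset Printing Implicit Defensive.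
Import Order.TTheory GRing.Theory Num.Theory.
Local Open Scope classical_set_scope.
Local Open Scope ring_scope.

(* Buses are 'I_n; lines are given by a symmetric irreflexive relation e,
   with reactance x k m on line km. *)
Definition is_network (n : nat) (R : realType) (e : rel 'I_n)
    (x : 'I_n -> 'I_n -> R) : Prop :=
  [/\ forall k, ~~ e k k,
      forall k m, e k m = e m k,
      forall k m, e k m -> x k m = x m k,
      forall k m, e k m -> 0 < x k m
    & forall k m, connect e k m ].

Definition Bhat (n : nat) (R : realType) (e : rel 'I_n)
    (x : 'I_n -> 'I_n -> R) : 'M[R]_n :=
  \matrix_(k, m)
    if k == m then \sum_(j | e k j) (x k j)^-1
    else if e k m then - (x k m)^-1 else 0.

Definition uvec (n : nat) (R : realType) (s t : 'I_n) : 'cV[R]_n :=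
  \col_k (if k == s then 1 else if k == t then -1 else 0).

Definition is_vst (n : nat) (R : realType) (B : 'M[R]_n) (s t : 'I_n)
    (v : 'cV[R]_n) : Prop :=
  B *m v = uvec R s t /\ v t 0 = 0.

Definition rvec (n : nat) (R : realType) (Omega : Type)
    (X : 'I_n -> Omega -> R) (w : Omega) : 'cV[R]_n :=
  \col_k X k w.

Definition covmx d (Omega : measurableType d) (R : realType)
    (P : probability Omega R) (n : nat) (X : 'I_n -> Omega -> R) : 'M[R]_n :=
  \matrix_(i, j) fine (covariance P (X i) (X j)).

(* mutual independence of the random vector theta, the random bus S and the
   real random variable G, stated on the generating pi-systems
   (measurable rectangles for theta, all subsets of buses, Borel sets). *)
Definition mutually_indep3 d (Omega : measurableType d) (R : realType)
    (P : probability Omega R) (n : nat) (theta : 'I_n -> Omega -> R)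
    (S : Omega -> 'I_n) (G : Omega -> R) : Prop :=
  forall (A : 'I_n -> set R) (B : set 'I_n) (C : set R),
    (forall i, measurable (A i)) -> measurable C ->
    let EA := [set w | forall i, A i (theta i w)] in
    P (EA `&` S @^-1` B `&` G @^-1` C)
    = (P EA * P (S @^-1` B) * P (G @^-1` C))%E.

(* Main.v *)
Require Import Defs.
From HB Require Import structures.
From mathcomp Require Import all_boot all_order all_algebra.
From mathcomp Require Import all_classical all_reals all_analysis.
From mathcomp Require Import measurable_realfun.
Import Order.TTheory GRing.Theory Num.Theory.
Set Implicit Arguments. Unset Strict Implicit. Unset Printing Implicit Defensive.
Local Open Scope classical_set_scope.
Local Open Scope ring_scope.

Section Core.
Local Open Scope ereal_scope.
Lemma Lfun_meas d (Omega : measurableType d) (R : realType) (P : probability Omega R) p (X : Omega -> R) :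
  X \in Lfun P p -> measurable_fun setT X.
Proof. by rewrite inE => /andP[]; rewrite inE. Qed.

Lemma indep_mul d (Omega : measurableType d) (R : realType) (P : probability Omega R) (X Y : Omega -> R) :
  X \in Lfun P 1 -> Y \in Lfun P 1 ->
  (forall A C, measurable A -> measurable C ->
     P (X @^-1` A `&` Y @^-1` C) = P (X @^-1` A) * P (Y @^-1` C)) ->
  (X \* Y)%R \in Lfun P 1 /\ 'E_P[X \* Y] = 'E_P[X] * 'E_P[Y].
Proof.
move=> hX hY ind.
have mX := Lfun_meas hX; have mY := Lfun_meas hY.
have mXY : measurable_fun setT (fun w => (X w, Y w)) by exact: measurable_fun_pair.
pose XX : {mfun Omega >-> R} := Sub X (mem_set mX).
pose YY : {mfun Omega >-> R} := Sub Y (mem_set mY).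
pose ZZ : {mfun Omega >-> (R * R)%type} := Sub (fun w => (X w, Y w)) (mem_set mXY).
pose mu1 := distribution P XX.
pose mu2 := distribution P YY.
pose J := distribution P ZZ.
have JE : forall D, measurable D -> (mu1 \x mu2) D = J D.
  apply: product_measure_unique => A C mA mC.
  rewrite /J /distribution /pushforward /=.
  rewrite -ind //.
have mf : measurable_fun setT (fun z : R * R => (z.1 * z.2)%R).
  by apply: measurable_funM; [exact: measurable_fst|exact: measurable_snd].
have mEf : measurable_fun setT (EFin \o (fun z : R * R => (z.1 * z.2)%R)).
  exact/measurable_EFinP.
have iX : P.-integrable setT (EFin \o X) by apply/Lfun1_integrable.
have iY : P.-integrable setT (EFin \o Y) by apply/Lfun1_integrable.
have iX' : \int[mu1]_x `|x%:E| < +oo.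
  rewrite ge0_integral_distribution //=.
    by case/integrableP: iX.
  by apply: measurableT_comp => //; apply: measurableT_comp.
have iY' : \int[mu2]_x `|x%:E| < +oo.
  rewrite ge0_integral_distribution //=.
    by case/integrableP: iY.
  by apply: measurableT_comp => //; apply: measurableT_comp.
have iprod : (mu1 \x mu2).-integrable setT (EFin \o (fun z : R * R => (z.1 * z.2)%R)).
  apply/integrable12ltyP => //=.
  under eq_integral => x _.
    under eq_integral => y _ do rewrite normrM EFinM.
    rewrite ge0_integralZl //; last first.
      by apply: measurableT_comp => //; apply: measurableT_comp.
    over.
  rewrite (eq_integral (fun x : R => `|x%:E| * \int[mu2]_y `|y%:E|)) //.
  rewrite ge0_integralZr //=; last 2 first.
  - by apply: measurableT_comp => //; apply: measurableT_comp.
  - exact: integral_ge0.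
  by rewrite lte_mul_pinfty // ?ge0_fin_numE // integral_ge0.
have iJ : J.-integrable setT (EFin \o (fun z : R * R => (z.1 * z.2)%R)).
  apply/integrableP; split => //.
  rewrite (eq_measure_integral (mu1 \x mu2)); first by case/integrableP: iprod.
  by move=> A mA _; exact: (esym (JE A mA)).
have iP : P.-integrable setT (EFin \o (X \* Y)%R).
  apply/integrableP; split.
    by apply/measurable_EFinP; apply: measurable_funM.
  have := @ge0_integral_distribution _ _ _ _ _ P ZZ (fun z : R * R => `|(z.1 * z.2)%:E|).
  rewrite /= => <- //.
    by case/integrableP: iJ.
  apply/measurable_EFinP; apply: measurableT_comp => //.
have mu1i : mu1.-integrable setT EFin.
  apply/integrableP; split => //; exact/measurable_EFinP.
have mu2i : mu2.-integrable setT EFin.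
  apply/integrableP; split => //; exact/measurable_EFinP.
split; first exact/Lfun1_integrable.
have EXE : 'E_P[X] = \int[mu1]_x x%:E.
  rewrite unlock integral_distribution //=; exact/measurable_EFinP.
have EYE : 'E_P[Y] = \int[mu2]_x x%:E.
  rewrite unlock integral_distribution //=; exact/measurable_EFinP.
have EYf : 'E_P[Y] \is a fin_num by apply: expectation_fin_num.
rewrite EXE -(fineK EYf) unlock.
have := @integral_distribution _ _ _ _ _ P ZZ (EFin \o (fun z : R * R => (z.1 * z.2)%R)) mEf iP.
rewrite /= => <-.
rewrite (eq_measure_integral (mu1 \x mu2)); last first.
  by move=> A mA _; exact: (esym (JE A mA)).
rewrite -(integral12_prod_meas1 iprod).
rewrite /fubini_F /=.
under eq_integral => x _.
  under eq_integral => y _ do rewrite EFinM.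
  rewrite (integralZl measurableT mu2i) -EYE -(fineK EYf).
  over.
rewrite /= (integralZr measurableT mu1i).
by rewrite unlock.
Qed.
End Core.


Lemma Bhat_row n (R : realType) (e : rel 'I_n) (x : 'I_n -> 'I_n -> R) (y : 'cV[R]_n) k :
  (forall k, ~~ e k k) ->
  (Bhat e x *m y) k 0 = \sum_(j | e k j) (y k 0 - y j 0) / x k j.
Proof.
move=> irr.
rewrite mxE (bigD1 k) //= mxE eqxx.
under [X in _ = X]eq_bigr => j _ do rewrite mulrBl.
rewrite sumrB -mulr_sumr mulrC; congr (_ + _).
rewrite (big_mkcond (fun j => j != k)) (big_mkcond (fun j => e k j)) -sumrN.
apply: eq_bigr => j _; rewrite mxE.
case: (eqVneq j k) => [->|jk]; first by rewrite (negbTE (irr k)) oppr0.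
by case: (e k j); rewrite /= ?mul0r ?oppr0 // mulNr mulrC.
Qed.

Lemma Bhat_ker n (R : realType) (e : rel 'I_n) (x : 'I_n -> 'I_n -> R) (y : 'cV[R]_n) t :
  is_network e x -> Bhat e x *m y = 0 -> y t 0 = 0 -> y = 0.
Proof.
case=> irr sym xsym xpos conn By0 yt0.
have [k0 _ hk0] := @arg_maxP _ _ _ t predT (fun j => y j 0) erefl.
set M := y k0 0 in hk0.
have stepA : forall k j, y k 0 = M -> e k j -> y j 0 = M.
  move=> k j ykM ekj.
  have := @Bhat_row _ _ e x y k irr; rewrite By0 mxE => /esym H0.
  have := psumr_eq0P _ H0 ekj.
  have Hn : forall i, e k i -> 0 <= (y k 0 - y i 0) / x k i.
    move=> i eki; apply: divr_ge0; last exact: ltW (xpos _ _ eki).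
    by rewrite subr_ge0 ykM; apply: hk0.
  move=> /(_ Hn) /eqP; rewrite mulf_eq0 invr_eq0 (gt_eqF (xpos _ _ ekj)) orbF.
  by rewrite subr_eq0 => /eqP <-.
have cl : fingraph.closed e [pred j | y j 0 == M].
  move=> k j ekj /=; apply/eqP/eqP => h.
  - exact: stepA ekj.
  - by apply: (stepA j k h); rewrite sym.
have allM : forall m, y m 0 = M.
  move=> m; have := closed_connect cl (conn k0 m).
  by rewrite !inE eqxx => /esym/eqP.
by apply/matrixP => i j; rewrite (ord1 j) mxE allM -(allM t) yt0.
Qed.


Lemma Lfun2_dom d (Omega : measurableType d) (R : realType) (P : probability Omega R) (f g : Omega -> R) :
  measurable_fun setT f -> (forall w, `|f w| <= `|g w|) -> g \in Lfun P 2%:E -> f \in Lfun P 2%:E.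
Proof.
move=> mf fg; rewrite !inE => /andP[]; rewrite inE /= => mg; rewrite !inE /finite_norm unlock /= => hg.
apply/andP; split; first by rewrite inE.
rewrite inE /= /finite_norm unlock /=.
apply: le_lt_trans hg.
apply: gt0_ler_poweR.
- by rewrite invr_ge0.
- by rewrite in_itv /= leey integral_ge0 // => x _; apply: poweR_ge0.
- by rewrite in_itv /= leey integral_ge0 // => x _; apply: poweR_ge0.
apply: ge0_le_integral => //.
- apply/measurable_EFinP; apply/(@measurableT_comp _ _ _ _ _ _ (fun x : R => x `^ 2)%R) => //.
  exact/measurableT_comp.
- apply/measurable_EFinP; apply/(@measurableT_comp _ _ _ _ _ _ (fun x : R => x `^ 2)%R) => //.
  exact/measurableT_comp.
move=> x _; rewrite lee_fin ge0_ler_powR //.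
Qed.


Lemma mpre d (Omega : measurableType d) (R : realType) (h : Omega -> R) (A : set R) :
  measurable_fun setT h -> measurable A -> measurable (h @^-1` A).
Proof. by move=> mh mA; rewrite -[_ @^-1` _]setTI; apply: mh. Qed.

Lemma mpreR (R : realType) (h : R -> R) (A : set R) :
  measurable_fun setT h -> measurable A -> measurable (h @^-1` A).
Proof. by move=> mh mA; rewrite -[_ @^-1` _]setTI; apply: mh. Qed.

Lemma indep3_pair d (Omega : measurableType d) (R : realType) (P : probability Omega R)
  n (theta : 'I_n -> Omega -> R) (S : Omega -> 'I_n) (G : Omega -> R)
  (i s : 'I_n) (f g : R -> R) (c : R) :
  mutually_indep3 P theta S G ->
  (forall j, measurable_fun setT (theta j)) -> measurable_fun setT G ->
  measurable (S @^-1` [set s]) ->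
  measurable_fun setT f -> measurable_fun setT g ->
  forall A C, measurable A -> measurable C ->
  P ((fun w => if S w == s then f (theta i w) else c) @^-1` A `&` (fun w => g (G w)) @^-1` C)
  = (P ((fun w => if S w == s then f (theta i w) else c) @^-1` A) * P ((fun w => g (G w)) @^-1` C))%E.
Proof.
move=> hind mth mG mSs mf mg A C mA mC.
have ind2 : forall A' Bset C', measurable A' -> measurable C' ->
    P (theta i @^-1` A' `&` S @^-1` Bset `&` G @^-1` C') =
    (P (theta i @^-1` A') * P (S @^-1` Bset) * P (G @^-1` C'))%E.
  move=> A' Bset C' mA' mC'.
  have := hind (fun j => if j == i then A' else setT) Bset C' _ mC'.
  have EAE : [set w | forall j, (if j == i then A' else setT) (theta j w)] = theta i @^-1` A'.
    apply/seteqP; split => w /=.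
      by move=> /(_ i); rewrite eqxx.
    by move=> h j; case: eqP => [->|].
  rewrite /= EAE; apply.
  by move=> j; case: eqP.
have ind2' : forall A' Bset, measurable A' ->
    P (theta i @^-1` A' `&` S @^-1` Bset) = (P (theta i @^-1` A') * P (S @^-1` Bset))%E.
  move=> A' Bset mA'; have := ind2 A' Bset setT mA' measurableT.
  by rewrite preimage_setT setIT probability_setT mule1.
have indE : forall A' Bset C', measurable A' -> measurable C' ->
    P (theta i @^-1` A' `&` S @^-1` Bset `&` G @^-1` C') =
    (P (theta i @^-1` A' `&` S @^-1` Bset) * P (G @^-1` C'))%E.
  by move=> A' Bset C' mA' mC'; rewrite ind2 // ind2'.
have mgC : measurable (g @^-1` C) by exact: mpreR.
have mA1 : measurable (f @^-1` A) by exact: mpreR.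
have mA2 : measurable [set _ : R | A c].
  by case: (pselect (A c)) => h; [rewrite (_ : [set _ | A c] = setT) //; apply/seteqP; split|
    rewrite (_ : [set _ | A c] = set0) //; apply/seteqP; split].
have XE : (fun w => if S w == s then f (theta i w) else c) @^-1` A =
    (theta i @^-1` (f @^-1` A) `&` S @^-1` [set s]) `|`
    (theta i @^-1` [set _ | A c] `&` S @^-1` (~` [set s])).
  apply/seteqP; split => w /=.
    by case: eqP => [-> h|ne h]; [left|right].
  by case=> -[h1 h2]; case: eqP => // ne; exfalso; apply: h2.
have mE1 : measurable (theta i @^-1` (f @^-1` A) `&` S @^-1` [set s]).
  by apply: measurableI => //; exact: mpre.
have mE2 : measurable (theta i @^-1` [set _ | A c] `&` S @^-1` (~` [set s])).
  apply: measurableI; first exact: mpre.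
  by rewrite -preimage_setC; exact: measurableC.
have dis : forall U V, (theta i @^-1` U `&` S @^-1` [set s]) `&` (theta i @^-1` V `&` S @^-1` (~` [set s])) = set0.
  by move=> U V; apply/seteqP; split => w //= [[_ h1] [_ h2]].
have gGC : (fun w => g (G w)) @^-1` C = G @^-1` (g @^-1` C) by [].
have mGC : measurable (G @^-1` (g @^-1` C)) by exact: mpre.
have hU : forall U V, measurable U -> measurable V -> U `&` V = set0 ->
    P (U `|` V) = (P U + P V)%E.
  by move=> U V mU mV h; exact: measureU.
rewrite XE gGC setIUl hU; last 3 first.
- exact: measurableI.
- exact: measurableI.
- by rewrite setIACA dis set0I.
rewrite indE // indE // hU ?dis //.
by rewrite ge0_muleDl.
Qed.


Section Tool.
Context d (Omega : measurableType d) (R : realType) (P : probability Omega R).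
Local Notation L2 := (Lfun P 2%:E).
Definition rcov (X Y : Omega -> R) := fine (covariance P X Y).

Lemma L2_L1 (X : Omega -> R) : X \in L2 -> X \in Lfun P 1.
Proof. by apply: Lfun_subset12; exact: fin_num_measure. Qed.

Lemma rcovE (X Y : Omega -> R) : X \in L2 -> Y \in L2 ->
  rcov X Y = fine 'E_P[X \* Y] - fine 'E_P[X] * fine 'E_P[Y].
Proof.
move=> hX hY.
have h1 := L2_L1 hX; have h2 := L2_L1 hY; have h3 := Lfun2_mul_Lfun1 hX hY.
rewrite /rcov covarianceE //.
by rewrite fineB ?fineM ?expectation_fin_num ?fin_numM ?expectation_fin_num.
Qed.

Lemma rcovC (X Y : Omega -> R) : rcov X Y = rcov Y X.
Proof. by rewrite /rcov covarianceC. Qed.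

Lemma rcov_fin (X Y : Omega -> R) : X \in L2 -> Y \in L2 -> covariance P X Y \is a fin_num.
Proof.
move=> hX hY; apply: covariance_fin_num; [exact: L2_L1|exact: L2_L1|exact: Lfun2_mul_Lfun1].
Qed.

Lemma rcovDl (X Y Z : Omega -> R) : X \in L2 -> Y \in L2 -> Z \in L2 ->
  rcov (X \+ Y) Z = rcov X Z + rcov Y Z.
Proof.
move=> hX hY hZ; rewrite /rcov covarianceDl // fineD //; exact: rcov_fin.
Qed.

Lemma rcovZl (a : R) (X Y : Omega -> R) : X \in L2 -> Y \in L2 ->
  rcov (a \o* X) Y = a * rcov X Y.
Proof.
move=> hX hY; rewrite /rcov covarianceZl; [|exact: L2_L1|exact: L2_L1|exact: Lfun2_mul_Lfun1].
by rewrite fineM // rcov_fin.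
Qed.

Lemma L2_sum (I : finType) (A : {set I}) (F : I -> Omega -> R) :
  (forall s, F s \in L2) -> (\sum_(s in A) F s) \in L2.
Proof.
move=> h; have p12 : (1 <= 2%:E :> \bar R)%E by rewrite lee_fin ler1n.
by apply: rpred_sum => s _; exact: h.
Qed.

Lemma rcov_suml (I : finType) (A : {set I}) (F : I -> Omega -> R) (Y : Omega -> R) :
  (forall s, F s \in L2) -> Y \in L2 ->
  rcov (\sum_(s in A) F s) Y = \sum_(s in A) rcov (F s) Y.
Proof.
move=> hF hY.
suff : (\sum_(s in A) F s) \in L2 /\ rcov (\sum_(s in A) F s) Y = \sum_(s in A) rcov (F s) Y.
  by case.
elim/big_rec2: _ => [|s r f As [hf IH]].
  have -> : (0 : Omega -> R) = cst 0 by [].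
  by split; [exact: Lfun_cst | rewrite /rcov covariance_cst_l].
have p12 : (1 <= 2%:E :> \bar R)%E by rewrite lee_fin ler1n.
split; first by rewrite rpredD.
by rewrite -[F s + f]/(F s \+ f)%R rcovDl // IH.
Qed.

Lemma rcov_sumr (I : finType) (A : {set I}) (F : I -> Omega -> R) (Y : Omega -> R) :
  (forall s, F s \in L2) -> Y \in L2 ->
  rcov Y (\sum_(s in A) F s) = \sum_(s in A) rcov Y (F s).
Proof.
move=> hF hY; rewrite rcovC rcov_suml //.
by apply: eq_bigr => s _; rewrite rcovC.
Qed.

Lemma rcovDr (X Y Z : Omega -> R) : X \in L2 -> Y \in L2 -> Z \in L2 ->
  rcov Z (X \+ Y) = rcov Z X + rcov Z Y.
Proof. by move=> hX hY hZ; rewrite rcovC rcovDl // !(rcovC Z). Qed.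

Lemma rcovZr (a : R) (X Y : Omega -> R) : X \in L2 -> Y \in L2 ->
  rcov Y (a \o* X) = a * rcov Y X.
Proof. by move=> hX hY; rewrite rcovC rcovZl // rcovC. Qed.

End Tool.


Theorem lemma8 (R : realType) (n : nat) (e : rel 'I_n) (x : 'I_n -> 'I_n -> R)
  (Tset : {set 'I_n}) (t : 'I_n)
  (v : 'I_n -> 'cV[R]_n)
  (d : measure_display) (Omega : measurableType d) (P : probability Omega R)
  (theta : 'I_n -> Omega -> R) (S : Omega -> 'I_n) (G : Omega -> R)
  (sigma2 : R) (thetah : 'I_n -> Omega -> R) :
  is_network e x ->
  (2 <= #|Tset|)%N -> t \in Tset ->
  (forall s, s \in Tset :\ t -> is_vst (Bhat e x) s t (v s)) ->
  (forall i, theta i \in Lfun P 2%:E) ->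
  (forall w, theta t w = 0) ->
  (forall w, S w \in Tset :\ t) ->
  (forall i, measurable (S @^-1` [set i])) ->
  (forall s, s \in Tset :\ t ->
     P (S @^-1` [set s]) = ((#|Tset :\ t|%:R)^-1)%:E) ->
  G \in Lfun P 2%:E ->
  ('E_P[G] = 0)%E ->
  'V_P[G] = sigma2%:E ->
  mutually_indep3 P theta S G ->
  (forall w, thetah t w = 0) ->
  (forall w, Bhat e x *m rvec thetah w
             = Bhat e x *m rvec theta w + G w *: uvec R (S w) t) ->
  covmx P thetah
  = covmx P theta
    + (sigma2 / (#|Tset|.-1)%:R) *: \sum_(s in Tset :\ t) (v s *m (v s)^T).
Proof.
move=> net T2 tT hv thL2 tht0 hS mS PS GL2 EG0 VG ind thh0 hB.
set T' := Tset :\ t.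
have cardT' : #|Tset|.-1 = #|T'| by rewrite /T' (cardsD1 t Tset) tT add1n.
have p12 : (1 <= 2%:E :> \bar R)%E by rewrite lee_fin ler1n.
have mth : forall j, measurable_fun setT (theta j) by move=> j; exact: Lfun_meas (thL2 j).
have mG : measurable_fun setT G := Lfun_meas GL2.
have rep : forall i w, thetah i w = theta i w + G w * v (S w) i 0.
  move=> i w; have [Bv vt] := hv (S w) (hS w).
  have := @Bhat_ker _ _ e x (rvec thetah w - rvec theta w - G w *: v (S w)) t net.
  rewrite !mulmxBr hB -scalemxAr Bv [_ + G w *: _]addrC addrK subrr => /(_ erefl).
  rewrite !mxE thh0 tht0 vt mulr0 !subr0 => /(_ erefl) /matrixP /(_ i 0).
  rewrite !mxE => /eqP; rewrite subr_eq0 subr_eq => /eqP ->.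
  by rewrite addrC.
pose Is (s : 'I_n) : Omega -> R := fun w => if S w == s then 1 else 0.
pose Z (s : 'I_n) : Omega -> R := Is s \* G.
have IsE : forall s, Is s = \1_(S @^-1` [set s]).
  move=> s; apply/funext => w; rewrite /Is indicE.
  by case: eqP => h; [rewrite mem_set | rewrite memNset].
have mIs : forall s, measurable_fun setT (Is s).
  by move=> s; rewrite IsE; exact: measurable_indic.
have IsL2 : forall s, Is s \in Lfun P 2%:E.
  move=> s; apply: (@Lfun2_dom _ _ _ _ _ (cst 1)) => //; last exact: Lfun_cst.
  by move=> w; rewrite /Is; case: ifP; rewrite ?normr0 ?normr1.
have ZL2 : forall s, Z s \in Lfun P 2%:E.
  move=> s; apply: (@Lfun2_dom _ _ _ _ _ G) => //.
    exact: measurable_funM.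
  by move=> w; rewrite /Z /Is /=; case: ifP; rewrite ?mul1r ?mul0r ?normr0.
pose Xth (i s : 'I_n) : Omega -> R := fun w => if S w == s then theta i w else 0.
have XthL2 : forall i s, Xth i s \in Lfun P 2%:E.
  move=> i s; apply: (@Lfun2_dom _ _ _ _ _ (theta i)) => //.
    have -> : Xth i s = Is s \* theta i.
      by apply/funext => w; rewrite /Xth /Is /=; case: ifP; rewrite ?mul1r ?mul0r.
    exact: measurable_funM.
  by move=> w; rewrite /Xth; case: ifP; rewrite ?normr0.
have GL1 := L2_L1 GL2.
have EGG : ('E_P[G \* G] = sigma2%:E)%E.
  have := varianceE GL2; rewrite VG EG0.
  have -> : (G ^+ 2 = G \* G)%R by rewrite expr2.
  rewrite expe2 mule0 sube0 => ->.
  by [].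
have EIs : forall s, s \in T' -> ('E_P[Is s] = ((#|T'|%:R)^-1)%:E)%E.
  by move=> s sT; rewrite IsE expectation_indic // PS.
have EZ : forall s, fine 'E_P[Z s] = 0.
  move=> s.
  have hi := @indep3_pair _ _ _ P _ theta S G t s (cst 1) id 0 ind mth mG (mS s)
           (measurable_cst _) (@measurable_id _ _ setT).
  have [_ ->] := @indep_mul _ _ _ P (Is s) G (L2_L1 (IsL2 s)) GL1 hi.
  by rewrite EG0 mule0.
have EthZ : forall i s, fine 'E_P[theta i \* Z s] = 0.
  move=> i s.
  have -> : theta i \* Z s = Xth i s \* G.
    by apply/funext => w; rewrite /Xth /Z /Is /=; case: ifP; rewrite ?mul1r ?mul0r ?mulr0.
  have hi := @indep3_pair _ _ _ P _ theta S G i s id id 0 ind mth mG (mS s)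
           (@measurable_id _ _ setT) (@measurable_id _ _ setT).
  have [_ ->] := @indep_mul _ _ _ P (Xth i s) G (L2_L1 (XthL2 i s)) GL1 hi.
  by rewrite EG0 mule0.
have EZZ : forall s r, s \in T' ->
    fine 'E_P[Z s \* Z r] = if s == r then sigma2 / (#|T'|%:R) else 0.
  move=> s r sT; case: eqP => [<-|neq].
    have -> : Z s \* Z s = Is s \* (G \* G).
      by apply/funext => w; rewrite /Z /Is /=; case: ifP; rewrite ?mul1r ?mul0r ?mulr0.
    have hi := @indep3_pair _ _ _ P _ theta S G t s (cst 1) (fun y => y * y) 0 ind mth mG (mS s)
           (measurable_cst _) (measurable_funM (@measurable_id _ _ setT) (@measurable_id _ _ setT)).
    have [_ ->] := @indep_mul _ _ _ P (Is s) (G \* G) (L2_L1 (IsL2 s)) (Lfun2_mul_Lfun1 GL2 GL2) hi.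
    by rewrite EIs // EGG /= mulrC.
  have -> : Z s \* Z r = cst 0.
    apply/funext => w; rewrite /Z /Is /=.
    case: (eqVneq (S w) s) => [->|_]; last by rewrite mul0r mul0r.
    by move/eqP/negbTE: neq => ->; rewrite mul0r mulr0.
  by rewrite expectation_cst.
have rthZ : forall i s, rcov P (theta i) (Z s) = 0.
  by move=> i s; rewrite rcovE // EthZ EZ mulr0 subr0.
have rZZ : forall s r, s \in T' ->
    rcov P (Z s) (Z r) = if s == r then sigma2 / (#|T'|%:R) else 0.
  by move=> s r sT; rewrite rcovE // (EZZ _ _ sT) !EZ mul0r subr0.
have aZL2 : forall (a : 'I_n -> R) s, (a s \o* Z s) \in Lfun P 2%:E.
  by move=> a s; apply: Lfun_scale => //; rewrite ler1n.
have rep2 : forall i, thetah i = theta i \+ \sum_(s in T') (v s i 0 \o* Z s).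
  move=> i; apply/funext => w; rewrite rep /= fct_sumE /=.
  rewrite (bigD1 (S w)) ?hS //= big1 ?addr0.
    by rewrite /Z /Is /= eqxx mul1r.
  move=> s /andP[_ ns]; rewrite /Z /Is /=.
  by rewrite eq_sym (negbTE ns) !mul0r.
apply/matrixP => i j.
rewrite !mxE summxE.
change (rcov P (thetah i) (thetah j) =
  rcov P (theta i) (theta j) + sigma2 / (#|Tset|.-1)%:R * \sum_(s in T') (v s *m (v s)^T) i j).
rewrite (rep2 i) (rep2 j).
have SiL2 := L2_sum T' (aZL2 (fun s => v s i 0)).
have SjL2 := L2_sum T' (aZL2 (fun s => v s j 0)).
rewrite rcovDl // ?rpredD // rcovDr // rcovDr //.
have h2 : rcov P (theta i) (\sum_(s in T') (v s j 0 \o* Z s)) = 0.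
  rewrite (rcov_sumr T' (aZL2 (fun s => v s j 0)) (thL2 i)) big1 // => s _.
  by rewrite rcovZr // rthZ mulr0.
have h3 : rcov P (\sum_(s in T') (v s i 0 \o* Z s)) (theta j) = 0.
  rewrite (rcov_suml T' (aZL2 (fun s => v s i 0)) (thL2 j)) big1 // => s _.
  by rewrite rcovZl // rcovC rthZ mulr0.
have h4 : rcov P (\sum_(s in T') (v s i 0 \o* Z s)) (\sum_(s in T') (v s j 0 \o* Z s))
    = sigma2 / (#|T'|%:R) * \sum_(s in T') v s i 0 * v s j 0.
  rewrite (rcov_suml T' (aZL2 (fun s => v s i 0)) SjL2) mulr_sumr; apply: eq_bigr => s sT.
  rewrite rcovZl // (rcov_sumr T' (aZL2 (fun s => v s j 0)) (ZL2 s)) (bigD1 s) //= big1 ?addr0.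
    by rewrite rcovZr // rZZ // eqxx mulrA [in RHS]mulrC.
  move=> r /andP[_ rs]; rewrite rcovZr // rZZ //.
  by rewrite eq_sym (negbTE rs) mulr0.
rewrite h2 h3 h4 addr0 add0r cardT'.
congr (_ + _ * _); apply: eq_bigr => s _.
by rewrite !mxE big_ord1 !mxE.
Qed.
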